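(* Let $n\ge2$, $1\le i<j\le n$, $\nu>0$, and let $X_{(1)}\le\dots\le X_{(n)}$ be the order statistics of $n$ i.i.d. random variables uniform on $[0,1]$. Then $$\mathbb{E}\big[X_{(i)}^\nu X_{(j)}^\nu\big]=\frac{\Gamma(n+1)\,\Gamma(\nu+1)\,\Gamma(\nu+i)}{\Gamma(i)\,\Gamma(n+1-j)}\sum_{k=0}^{\infty}(-1)^k\frac{\Gamma(n+k+1-j)}{\Gamma(k+1)\,\Gamma(\nu+1-k)\,\Gamma(\nu+n+k+1)},$$ where $1/\Gamma(\nu+1-k)$ is interpreted as $0$ whenever $\nu+1-k$ is a nonpositive integer.
   Context: $\Gamma$ denotes the Euler gamma function. The joint density of $(X_{(i)},X_{(j)})$ for $i<j$ is $\frac{\Gamma(n+1)}{\Gamma(i)\Gamma(j-i)\Gamma(n+1-j)}u^{i-1}(v-u)^{j-i-1}(1-v)^{n-j}$ on $0\le u\le v\le1$. *)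

(* Defs.v *)
From Stdlib Require Import Reals Lra Lia Factorial ClassicalEpsilon.
Open Scope R_scope.

(* poch x m = x (x+1) ... (x+m)   (m+1 factors) *)
Fixpoint poch (x : R) (m : nat) : R :=
  match m with
  | O => x
  | S m' => poch x m' * (x + INR m)
  end.

(* Gauss' product definition of the Gamma function:
   Gamma x = lim_{m->oo} m! m^x / (x (x+1) ... (x+m)),  x not in {0,-1,-2,...} *)
Definition gauss_seq (x : R) (m : nat) : R :=
  INR (fact (S m)) * Rpower (INR (S m)) x / poch x (S m).

Definition Gamma (x : R) : R :=
  epsilon (inhabits 0) (fun l => Un_cv (gauss_seq x) l).

(* Reciprocal Gamma 1/Gamma (entire; equal to 0 at the nonpositive integers),
   defined as the limit of the reciprocal Gauss sequence. *)
Definition rgauss_seq (x : R) (m : nat) : R :=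
  poch x (S m) / (INR (fact (S m)) * Rpower (INR (S m)) x).

Definition RGamma (x : R) : R :=
  epsilon (inhabits 0) (fun l => Un_cv (rgauss_seq x) l).

Definition rpow (u a : R) : R := if Rle_dec u 0 then 0 else Rpower u a.

Definition has_RInt (f : R -> R) (a b I : R) : Prop :=
  exists pr : Riemann_integrable f a b, RiemannInt pr = I.

(* joint density of (X_(i), X_(j)), i < j, for n iid U[0,1] *)
Definition os_density (n i j : nat) (u v : R) : R :=
  Gamma (INR n + 1) / (Gamma (INR i) * Gamma (INR j - INR i) * Gamma (INR n + 1 - INR j))
  * u ^ (i - 1) * (v - u) ^ (j - i - 1) * (1 - v) ^ (n - j).

(* E[X_(i)^nu X_(j)^nu] = int_0^1 ( int_0^v dens(u,v) u^nu v^nu du ) dv :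
   the iterated integrals exist and the expectation equals E *)
Definition os_moment_is (n i j : nat) (nu E : R) : Prop :=
  exists g : R -> R,
    (forall v, 0 <= v <= 1 ->
       has_RInt (fun u => os_density n i j u v * rpow u nu * rpow v nu) 0 v (g v))
    /\ has_RInt g 0 1 E.

Definition series_term (n j : nat) (nu : R) (k : nat) : R :=
  (-1) ^ k * Gamma (INR n + INR k + 1 - INR j)
  / (Gamma (INR k + 1) * Gamma (nu + INR n + INR k + 1))
  * RGamma (nu + 1 - INR k).

(* Main.v *)
Require Import Defs.
From Stdlib Require Import Reals Lra Lia Factorial ClassicalEpsilon.
From Coquelicot Require Import Coquelicot.
Open Scope R_scope.

Fixpoint pr (f : nat -> R) (r : nat) : R :=
  match r with O => 1 | S r' => pr f r' * f r' end.

Lemma pr_ext f g r : (forall l, (l < r)%nat -> f l = g l) -> pr f r = pr g r.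
Proof. induction r; simpl; intros H; auto. rewrite IHr by (intros; apply H; lia). rewrite H by lia; auto. Qed.

Lemma pr_shift f r : pr f (S r) = f O * pr (fun l => f (S l)) r.
Proof. induction r. simpl; ring. change (pr f (S (S r))) with (pr f (S r) * f (S r)). rewrite IHr. simpl; ring. Qed.

Lemma pr_add f a b : pr f (a + b) = pr f a * pr (fun l => f (a + l)%nat) b.
Proof. induction b. simpl. rewrite Nat.add_0_r; ring. rewrite Nat.add_succ_r. simpl. rewrite IHb. ring. Qed.

Lemma pr_pos f r : (forall l, (l < r)%nat -> 0 < f l) -> 0 < pr f r.
Proof. induction r; simpl; intros H. lra. apply Rmult_lt_0_compat. apply IHr; intros; apply H; lia. apply H; lia. Qed.

Lemma pr_mult f g r : pr (fun l => f l * g l) r = pr f r * pr g r.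
Proof. induction r; simpl. ring. rewrite IHr; ring. Qed.

Lemma pr_inv f r : (forall l, (l < r)%nat -> f l <> 0) -> pr (fun l => / f l) r = / pr f r.
Proof. induction r; simpl; intros H. field. rewrite IHr by (intros; apply H; lia).
 assert (pr f r <> 0). { clear IHr. induction r; simpl. lra. apply Rmult_integral_contrapositive; split. apply IHr; intros; apply H; lia. apply H; lia. }
 assert (f r <> 0) by (apply H; lia). field; auto. Qed.

Lemma pr_rev f m : pr (fun l => f (m - l)%nat) (S m) = pr f (S m).
Proof. induction m. simpl; auto.
 rewrite pr_shift. replace (S m - 0)%nat with (S m) by lia.
 rewrite (pr_ext (fun l => f (S m - S l)%nat) (fun l => f (m - l)%nat)) by (intros; f_equal).
 rewrite IHm. change (pr f (S (S m))) with (pr f (S m) * f (S m)). ring. Qed.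

Lemma poch_pr x m : poch x m = pr (fun l => x + INR l) (S m).
Proof. induction m. simpl; ring. simpl poch. rewrite IHm. reflexivity. Qed.

Lemma exp_le_mono a b : a <= b -> exp a <= exp b.
Proof. intros [H|H]. left; apply exp_increasing; auto. subst; lra. Qed.

Lemma ev_INR_gt c : eventually (fun m => c < INR m).
Proof. apply (proj2 (is_lim_seq_spec INR p_infty) is_lim_seq_INR). Qed.

Lemma lim_inv_shift c : is_lim_seq (fun m => / (INR m + c)) 0.
Proof.
 assert (H: is_lim_seq (fun m => INR m + c) p_infty).
 { apply (is_lim_seq_plus INR (fun _ => c) p_infty c p_infty). apply is_lim_seq_INR. apply is_lim_seq_const. reflexivity. }
 apply (is_lim_seq_inv _ _ H). discriminate.
Qed.

Lemma lim_ratio c d : is_lim_seq (fun m => (INR m + d) / (INR m + c)) 1.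
Proof.
 apply is_lim_seq_ext_loc with (fun m => 1 + (d - c) * / (INR m + c)).
 { destruct (ev_INR_gt (-c)) as [N HN]. exists N. intros m Hm. specialize (HN m Hm). field. lra. }
 replace (Finite 1) with (Finite (1 + (d - c) * 0)) by (f_equal; ring).
 apply is_lim_seq_plus'. apply is_lim_seq_const. apply is_lim_seq_mult'. apply is_lim_seq_const. apply lim_inv_shift.
Qed.

Lemma Gamma_lim x l : Un_cv (gauss_seq x) l -> Gamma x = l.
Proof. intros H. unfold Gamma. apply (UL_sequence (gauss_seq x)); auto.
 apply (epsilon_spec (inhabits 0) (fun l => Un_cv (gauss_seq x) l)). exists l; auto. Qed.

Lemma RGamma_lim x l : Un_cv (rgauss_seq x) l -> RGamma x = l.
Proof. intros H. unfold RGamma. apply (UL_sequence (rgauss_seq x)); auto.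
 apply (epsilon_spec (inhabits 0) (fun l => Un_cv (rgauss_seq x) l)). exists l; auto. Qed.

Lemma ineq1 N x : 0 < N -> 0 <= x -> Rpower N x * (1 + x / (N + 1)) <= Rpower (N + 1) x.
Proof.
 intros HN Hx. set (y := N / (N + 1)).
 assert (Hy : 0 < y) by (unfold y; apply Rdiv_lt_0_compat; lra).
 assert (E : Rpower N x = Rpower (N+1) x * Rpower y x).
 { rewrite Rpower_mult_distr by lra. f_equal. unfold y; field; lra. }
 assert (Hl : ln y <= y - 1).
 { rewrite <- (ln_exp (y - 1)). apply ln_le; auto. pose proof (exp_ineq1_le (y-1)); lra. }
 assert (Hy1 : y - 1 = - / (N+1)) by (unfold y; field; lra).
 assert (Hr : Rpower y x <= exp (- (x / (N+1)))).
 { unfold Rpower. apply exp_le_mono. unfold Rdiv. rewrite Hy1 in Hl. nra. }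
 assert (Hq : exp (- (x / (N+1))) * (1 + x / (N+1)) <= 1).
 { pose proof (exp_ineq1_le (x/(N+1))).
   assert (E1 : exp (-(x/(N+1))) * exp (x/(N+1)) = 1) by (rewrite <- exp_plus; replace (-(x/(N+1)) + x/(N+1)) with 0 by ring; apply exp_0).
   pose proof (exp_pos (-(x/(N+1)))). nra. }
 rewrite E. assert (0 < Rpower (N+1) x) by (unfold Rpower; apply exp_pos).
 assert (0 <= 1 + x/(N+1)) by (assert (0 <= x/(N+1)) by (apply Rdiv_le_0_compat; lra); lra).
 assert (Rpower y x * (1 + x/(N+1)) <= 1) by (eapply Rle_trans; [apply Rmult_le_compat_r; [auto|apply Hr]|apply Hq]).
 nra.
Qed.

Lemma Rpower_le_neg a b e : 0 < a <= b -> e <= 0 -> Rpower b e <= Rpower a e.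
Proof. intros Hab He. unfold Rpower. apply exp_le_mono.
 assert (ln a <= ln b) by (apply ln_le; lra). nra. Qed.

Lemma ineq2 N x : 0 < N -> 0 <= x <= 1 -> Rpower (N + 1) x <= Rpower N x * (1 + x / N).
Proof.
 intros HN Hx.
 destruct (MVT_cor2 (fun t => Rpower t x) (fun t => x * Rpower t (x - 1)) N (N+1)) as [c [Hc1 Hc2]].
 lra. intros c Hc. apply derivable_pt_lim_power. lra.
 assert (Rpower c (x - 1) <= Rpower N (x - 1)) by (apply Rpower_le_neg; lra).
 assert (E : Rpower N x = Rpower N (x - 1) * N).
 { replace x with ((x - 1) + 1) at 1 by ring. rewrite Rpower_plus, Rpower_1; lra. }
 replace (Rpower N x * (1 + x / N)) with (Rpower N x + x * Rpower N (x-1)) by (rewrite E; field; lra).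
 nra.
Qed.

Lemma poch_pos x m : 0 < x -> 0 < poch x m.
Proof. intros. rewrite poch_pr. apply pr_pos. intros. pose proof (pos_INR l); lra. Qed.

Lemma INR_fact_pos k : 0 < INR (fact k).
Proof. apply lt_0_INR. apply lt_O_fact. Qed.

Lemma gauss_cv01 x : 0 < x <= 1 -> { l | Un_cv (gauss_seq x) l /\ 0 < l }.
Proof.
 intros Hx.
 set (c := fun m => INR (fact (S m)) * Rpower (INR (S m) + 1) x / poch x (S m)).
 assert (Hgr : Un_growing (gauss_seq x)).
 { intros m. unfold gauss_seq.
   replace (fact (S (S m))) with (S (S m) * fact (S m))%nat by reflexivity.
   change (poch x (S (S m))) with (poch x (S m) * (x + INR (S (S m)))).
   rewrite mult_INR.
   pose proof (poch_pos x (S m) (proj1 Hx)). pose proof (INR_fact_pos (S m)).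
   pose proof (ineq1 (INR (S m)) x ltac:(apply lt_0_INR; lia) ltac:(lra)).
   replace (INR (S (S m))) with (INR (S m) + 1) by (rewrite (S_INR (S m)); ring).
   assert (0 < INR (S m)) by (apply lt_0_INR; lia).
   apply Rmult_le_reg_r with (poch x (S m) * (x + (INR (S m) + 1)) / INR (fact (S m))).
   apply Rdiv_lt_0_compat; auto. apply Rmult_lt_0_compat; lra.
   field_simplify; try lra.
   assert (Eq: Rpower (INR (S m)) x * (1 + x / (INR (S m) + 1)) * (INR (S m)+1) = Rpower (INR (S m)) x * x + Rpower (INR (S m)) x * INR (S m) + Rpower (INR (S m)) x) by (field; lra).
   rewrite <- Eq. nra. }
 assert (Hc : forall m, c (S m) <= c m).
 { intros m. unfold c.
   replace (fact (S (S m))) with (S (S m) * fact (S m))%nat by reflexivity.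
   change (poch x (S (S m))) with (poch x (S m) * (x + INR (S (S m)))).
   rewrite mult_INR.
   pose proof (poch_pos x (S m) (proj1 Hx)). pose proof (INR_fact_pos (S m)).
   replace (INR (S (S m))) with (INR (S m) + 1) by (rewrite (S_INR (S m)); ring).
   assert (0 < INR (S m)) by (apply lt_0_INR; lia).
   pose proof (ineq2 (INR (S m) + 1) x ltac:(lra) ltac:(lra)).
   apply Rmult_le_reg_r with (poch x (S m) * (x + (INR (S m) + 1)) / INR (fact (S m))).
   apply Rdiv_lt_0_compat; auto. apply Rmult_lt_0_compat; lra.
   field_simplify; try lra.
   assert (Eq: Rpower (INR (S m) + 1) x * (1 + x / (INR (S m) + 1)) * (INR (S m)+1) = INR (S m) * Rpower (INR (S m) + 1) x + x * Rpower (INR (S m) + 1) x + Rpower (INR (S m) + 1) x) by (field; lra).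
   rewrite <- Eq. nra. }
 assert (Hc0 : forall m, c m <= c O).
 { induction m. lra. eapply Rle_trans; [apply Hc|auto]. }
 assert (Hbc : forall m, gauss_seq x m <= c m).
 { intros m. unfold gauss_seq, c. unfold Rdiv. apply Rmult_le_compat_r.
   left; apply Rinv_0_lt_compat, poch_pos; lra. apply Rmult_le_compat_l. left; apply INR_fact_pos.
   apply Rle_Rpower_l. lra. split. apply lt_0_INR; lia. lra. }
 destruct (growing_cv _ Hgr) as [l Hl].
 { exists (c O). intros y [m Hm]. subst. eapply Rle_trans; [apply Hbc|apply Hc0]. }
 exists l. split; auto.
 apply Rlt_le_trans with (gauss_seq x O). unfold gauss_seq.
 apply Rdiv_lt_0_compat. apply Rmult_lt_0_compat. apply INR_fact_pos. unfold Rpower; apply exp_pos.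
 apply poch_pos; lra.
 apply growing_ineq; auto.
Qed.

Lemma poch_shift x m : poch (x+1) m * x = poch x m * (x + INR m + 1).
Proof. induction m. simpl; ring. cbn [poch].
 replace (poch (x + 1) m * (x + 1 + INR (S m)) * x) with ((poch (x+1) m * x) * (x + 1 + INR (S m))) by ring.
 rewrite IHm. rewrite S_INR. ring. Qed.

Lemma Rpower_pos a b : 0 < Rpower a b.
Proof. unfold Rpower; apply exp_pos. Qed.

Lemma Rpower_succ N x : 0 < N -> Rpower N (x + 1) = Rpower N x * N.
Proof. intros. rewrite Rpower_plus, Rpower_1; auto. Qed.

Lemma gauss_rec x m : 0 < x ->
  gauss_seq (x+1) m = gauss_seq x m * (x * ((INR m + 1) / (INR m + (x + 2)))).
Proof.
 intros Hx. unfold gauss_seq.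
 assert (HN : 0 < INR (S m)) by (apply lt_0_INR; lia).
 rewrite Rpower_succ by auto.
 assert (E := poch_shift x (S m)).
 pose proof (poch_pos x (S m) Hx). pose proof (poch_pos (x+1) (S m) ltac:(lra)).
 rewrite S_INR in *.
 assert (Hp : poch (x+1) (S m) = poch x (S m) * (x + (INR m + 1) + 1) / x) by (rewrite <- E; field; lra).
 rewrite Hp. pose proof (pos_INR m). field. repeat split; lra.
Qed.

Lemma lim_ratio_S x : is_lim_seq (fun m => x * ((INR m + 1) / (INR m + (x + 2)))) x.
Proof.
 replace (Finite x) with (Finite (x * 1)) by (f_equal; ring).
 apply is_lim_seq_mult'. apply is_lim_seq_const. apply lim_ratio.
Qed.

Lemma gauss_cv x : 0 < x -> exists l, Un_cv (gauss_seq x) l /\ 0 < l.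
Proof.
 intros Hx. destruct (ev_INR_gt x) as [N HN]. specialize (HN N (le_n N)).
 revert x Hx HN. induction N; intros x Hx HN.
 - simpl in HN; lra.
 - destruct (Rle_lt_dec x 1) as [H1|H1].
   + destruct (gauss_cv01 x) as [l Hl]; [lra|]. exists l; auto.
   + destruct (IHN (x - 1)) as [l [Hl Hl0]]. lra. rewrite S_INR in HN; lra.
     exists ((x-1) * l). split. 2: apply Rmult_lt_0_compat; lra.
     apply is_lim_seq_Reals. apply is_lim_seq_Reals in Hl.
     apply is_lim_seq_ext with (fun m => gauss_seq (x-1) m * ((x-1) * ((INR m + 1) / (INR m + ((x-1) + 2))))).
     { intros m. symmetry. replace x with ((x-1)+1) at 1 by ring. rewrite gauss_rec; auto. lra. }
     replace (Finite ((x-1)*l)) with (Finite (l * (x-1))) by (f_equal; ring).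
     apply is_lim_seq_mult'; auto. apply lim_ratio_S.
Qed.

Lemma Gamma_cv x : 0 < x -> Un_cv (gauss_seq x) (Gamma x) /\ 0 < Gamma x.
Proof. intros Hx. destruct (gauss_cv x Hx) as [l [Hl Hl0]]. rewrite (Gamma_lim x l Hl). auto. Qed.

Lemma Gamma_rec x : 0 < x -> Gamma (x + 1) = x * Gamma x.
Proof.
 intros Hx. destruct (Gamma_cv x Hx) as [H _]. apply Gamma_lim.
 apply is_lim_seq_Reals. apply is_lim_seq_Reals in H.
 apply is_lim_seq_ext with (fun m => gauss_seq x m * (x * ((INR m + 1) / (INR m + (x + 2))))).
 { intros m. rewrite gauss_rec; auto. }
 replace (Finite (x * Gamma x)) with (Finite (Gamma x * x)) by (f_equal; ring).
 apply is_lim_seq_mult'; auto. apply lim_ratio_S.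
Qed.

Lemma poch1 k : poch 1 k = INR (fact (S k)).
Proof. induction k. simpl; ring. cbn [poch]. rewrite IHk.
 change (fact (S (S k))) with (S (S k) * fact (S k))%nat. rewrite mult_INR. rewrite !S_INR. ring. Qed.

Lemma Gamma_1 : Gamma 1 = 1.
Proof.
 apply Gamma_lim. apply is_lim_seq_Reals.
 apply is_lim_seq_ext with (fun m => (INR m + 1) / (INR m + 2)).
 { intros m. unfold gauss_seq. rewrite poch1. rewrite Rpower_1 by (apply lt_0_INR; lia).
   change (fact (S (S m))) with (S (S m) * fact (S m))%nat. rewrite mult_INR.
   pose proof (INR_fact_pos (S m)). rewrite !S_INR. pose proof (pos_INR m). field. lra. }
 apply lim_ratio.
Qed.

Lemma Gamma_nat q : Gamma (INR q + 1) = INR (fact q).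
Proof. induction q. simpl. rewrite Rplus_0_l. apply Gamma_1.
 rewrite S_INR. rewrite Gamma_rec by (pose proof (pos_INR q); lra). rewrite IHq.
 change (fact (S q)) with (S q * fact q)%nat. rewrite mult_INR, S_INR. ring. Qed.

Lemma Gamma_shift x r : 0 < x -> Gamma (x + INR r) = Gamma x * pr (fun l => x + INR l) r.
Proof. intros Hx. induction r. simpl. rewrite Rplus_0_r; ring.
 rewrite S_INR. replace (x + (INR r + 1)) with ((x + INR r) + 1) by ring.
 rewrite Gamma_rec by (pose proof (pos_INR r); lra). rewrite IHr. simpl pr. ring. Qed.

Lemma rgauss_inv x m : 0 < x -> rgauss_seq x m = / gauss_seq x m.
Proof. intros Hx. unfold rgauss_seq, gauss_seq.
 pose proof (poch_pos x (S m) Hx). pose proof (INR_fact_pos (S m)). pose proof (Rpower_pos (INR (S m)) x).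
 field. repeat split; lra. Qed.

Lemma RGamma_pos x : 0 < x -> Un_cv (rgauss_seq x) (/ Gamma x).
Proof. intros Hx. destruct (Gamma_cv x Hx) as [H Hp].
 apply is_lim_seq_Reals. apply is_lim_seq_Reals in H.
 apply is_lim_seq_ext with (fun m => / gauss_seq x m). { intros; rewrite rgauss_inv; auto. }
 apply (is_lim_seq_inv _ _ H). intro E; injection E; lra. Qed.

Lemma rgauss_rec x m : INR m + (x + 2) <> 0 ->
  rgauss_seq x m = rgauss_seq (x + 1) m * (x * ((INR m + 1) / (INR m + (x + 2)))).
Proof. intros Hn. unfold rgauss_seq.
 assert (HN : 0 < INR (S m)) by (apply lt_0_INR; lia).
 rewrite Rpower_succ by auto.
 assert (E := poch_shift x (S m)).
 pose proof (INR_fact_pos (S m)). pose proof (Rpower_pos (INR (S m)) x).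
 rewrite S_INR in *.
 transitivity ((poch (x + 1) (S m) * x) / (INR (fact (S m)) * (Rpower (INR m + 1) x * (INR m + 1))) * ((INR m + 1) / (INR m + (x + 2)))).
 rewrite E. field. repeat split; lra.
 field. repeat split; lra.
Qed.

Lemma rgauss_down x L : Un_cv (rgauss_seq (x+1)) L -> Un_cv (rgauss_seq x) (x * L).
Proof. intros H. apply is_lim_seq_Reals. apply is_lim_seq_Reals in H.
 apply is_lim_seq_ext_loc with (fun m => rgauss_seq (x + 1) m * (x * ((INR m + 1) / (INR m + (x + 2))))).
 { destruct (ev_INR_gt (-(x+2))) as [N HN]. exists N. intros m Hm. specialize (HN m Hm).
   symmetry; apply rgauss_rec. intro; lra. }
 replace (Finite (x * L)) with (Finite (L * x)) by (f_equal; ring).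
 apply is_lim_seq_mult'; auto. apply lim_ratio_S.
Qed.

Lemma RGamma_down nu k : 0 < nu ->
  RGamma (nu + 1 - INR k) = pr (fun l => nu - INR l) k / Gamma (nu + 1).
Proof. intros Hnu. apply RGamma_lim. induction k.
 - simpl. replace (nu + 1 - 0) with (nu+1) by ring. unfold Rdiv; rewrite Rmult_1_l. apply RGamma_pos; lra.
 - replace (nu + 1 - INR (S k)) with (nu - INR k) by (rewrite S_INR; ring).
   replace (pr (fun l => nu - INR l) (S k) / Gamma (nu + 1)) with ((nu - INR k) * (pr (fun l => nu - INR l) k / Gamma (nu + 1))) by (simpl; unfold Rdiv; ring).
   apply rgauss_down. replace (nu - INR k + 1) with (nu + 1 - INR k) by ring. auto.
Qed.

Definition poc x k := pr (fun l => x + INR l) k.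
Definition uu a b c k := poc a k * poc b k / (INR (fact k) * poc c k).
Definition HH a b c K := poc a (S K) * poc b K / (INR (fact K) * poc c K).

Lemma poc_pos x k : 0 < x -> 0 < poc x k.
Proof. intros. unfold poc. apply pr_pos. intros. pose proof (pos_INR l); lra. Qed.

Lemma poc_S x k : poc x (S k) = poc x k * (x + INR k).
Proof. reflexivity. Qed.

Lemma poc_m1 b k : poc (b - 1) (S k) = (b - 1) * poc b k.
Proof. unfold poc. rewrite pr_shift. f_equal. simpl; ring. apply pr_ext. intros. rewrite S_INR; ring. Qed.

Lemma tele a b c k : 0 < c ->
  (a + b - c) * uu a b c k + (c - b) * uu a (b - 1) c k =
  HH a b c k - match k with O => 0 | S k' => HH a b c k' end.
Proof.
 intros Hc. destruct k.
 - unfold uu, HH, poc. simpl. field.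
 - unfold uu, HH. rewrite poc_m1. rewrite !poc_S.
   change (fact (S k)) with (S k * fact k)%nat. rewrite mult_INR.
   pose proof (INR_fact_pos k). pose proof (poc_pos c k Hc). pose proof (pos_INR k).
   rewrite !S_INR. field. repeat split; lra.
Qed.

Lemma tele_sum a b c K : 0 < c ->
  (a + b - c) * sum_f_R0 (uu a b c) K + (c - b) * sum_f_R0 (uu a (b - 1) c) K = HH a b c K.
Proof.
 intros Hc. induction K.
 - simpl. rewrite (tele a b c 0 Hc). ring.
 - simpl. pose proof (tele a b c (S K) Hc). lra.
Qed.

Lemma HH_S a b c K : 0 < c ->
  HH a b c (S K) = HH a b c K * ((a + INR (S K)) * (b + INR K) / (INR (S K) * (c + INR K))).
Proof.
 intros Hc. unfold HH. rewrite !poc_S.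
 change (fact (S K)) with (S K * fact K)%nat. rewrite mult_INR.
 pose proof (INR_fact_pos K). pose proof (poc_pos c K Hc). pose proof (pos_INR K).
 assert (0 < INR (S K)) by (apply lt_0_INR; lia).
 field. repeat split; lra.
Qed.

Lemma HH_bound a b c K0 : a <= 0 -> 0 < b -> b + 1 <= c -> - a <= INR K0 ->
  forall t, Rabs (HH a b c (K0 + t)) <= Rabs (HH a b c K0) * (b + INR K0) / (b + INR (K0 + t)).
Proof.
 intros Ha Hb Hc HK t. pose proof (pos_INR K0).
 induction t.
 - rewrite Nat.add_0_r. right. field. lra.
 - rewrite Nat.add_succ_r. rewrite HH_S by lra.
   set (K := (K0 + t)%nat) in *.
   assert (HKK : INR K0 <= INR K) by (apply le_INR; unfold K; lia).
   rewrite Rabs_mult.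
   assert (Hr : Rabs ((a + INR (S K)) * (b + INR K) / (INR (S K) * (c + INR K))) <= (b + INR K) / (b + INR (S K))).
   { rewrite S_INR. rewrite Rabs_right.
     2: { apply Rle_ge. apply Rdiv_le_0_compat. apply Rmult_le_pos; lra. apply Rmult_lt_0_compat; lra. }
     apply Rmult_le_reg_r with ((INR K + 1) * (c + INR K) * (b + (INR K + 1))).
     apply Rmult_lt_0_compat. apply Rmult_lt_0_compat; lra. lra.
     assert (h1 : (a + INR K + 1) * (b + INR K + 1) <= (INR K + 1) * (c + INR K)) by nra.
     assert (h2 : 0 < b + INR K) by lra.
     field_simplify; try lra. nra. }
   eapply Rle_trans. apply Rmult_le_compat. apply Rabs_pos. apply Rabs_pos. apply IHt. apply Hr.
   right. rewrite S_INR. field. split; lra.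
Qed.

Lemma HH_lim a b c : a <= 0 -> 0 < b -> b + 1 <= c -> is_lim_seq (HH a b c) 0.
Proof.
 intros Ha Hb Hc.
 destruct (ev_INR_gt (-a)) as [K0 HK0]. specialize (HK0 K0 (le_n _)).
 set (C := Rabs (HH a b c K0) * (b + INR K0)).
 apply is_lim_seq_le_le_loc with (fun K => - (C * / (INR K + b))) (fun K => C * / (INR K + b)).
 - exists K0. intros K HK. replace K with (K0 + (K - K0))%nat by lia.
   pose proof (HH_bound a b c K0 Ha Hb Hc ltac:(lra) (K - K0)).
   replace (b + INR (K0 + (K - K0))) with (INR (K0 + (K - K0)) + b) in H by ring.
   unfold C. apply Rabs_le_between. unfold Rdiv in H. rewrite Rmult_assoc in H |- *. auto.
 - replace (Finite 0) with (Rbar_opp (Finite (C * 0))) by (simpl; f_equal; ring).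
   apply -> is_lim_seq_opp. apply is_lim_seq_mult'. apply is_lim_seq_const. apply lim_inv_shift.
 - replace (Finite 0) with (Finite (C * 0)) by (f_equal; ring).
   apply is_lim_seq_mult'. apply is_lim_seq_const. apply lim_inv_shift.
Qed.

Lemma poc0_S K : poc (INR 0) (S K) = 0.
Proof. unfold poc. rewrite pr_shift. simpl. ring. Qed.

Lemma series_b a c (b : nat) : a <= 0 -> INR b + 2 <= c ->
  infinite_sum (uu a (INR b) c) (pr (fun l => (c - 1 - INR l) / (c - a - 1 - INR l)) b).
Proof.
 intros Ha. induction b; intros Hb.
 - simpl pr. intros eps Heps. exists O. intros K _.
   replace (sum_f_R0 _ K) with 1. unfold R_dist. rewrite Rminus_diag, Rabs_R0; auto.
   induction K. unfold uu, poc; simpl; field. cbn [sum_f_R0]. rewrite <- IHK. unfold uu. rewrite poc0_S. unfold Rdiv. ring.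
 - rewrite S_INR in Hb. pose proof (pos_INR b).
   specialize (IHb ltac:(lra)).
   assert (Hc : 0 < c) by lra.
   apply is_lim_seq_Reals. apply is_lim_seq_Reals in IHb.
   set (bb := INR (S b)).
   assert (Ebb : bb - 1 = INR b) by (unfold bb; rewrite S_INR; ring).
   apply is_lim_seq_ext with (fun K => (HH a bb c K - (c - bb) * sum_f_R0 (uu a (INR b) c) K) / (a + bb - c)).
   { intros K. rewrite <- (tele_sum a bb c K Hc). rewrite Ebb. field. unfold bb; rewrite S_INR; lra. }
   replace (Finite (pr (fun l => (c - 1 - INR l) / (c - a - 1 - INR l)) (S b)))
     with (Finite ((0 - (c - bb) * pr (fun l => (c - 1 - INR l) / (c - a - 1 - INR l)) b) / (a + bb - c))).
   2: { f_equal. simpl pr. unfold bb. rewrite S_INR. field. lra. }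
   apply is_lim_seq_div'; [ | apply is_lim_seq_const | intro; unfold bb in *; rewrite S_INR in *; lra].
   apply is_lim_seq_minus'. apply HH_lim; unfold bb; try rewrite S_INR; lra.
   apply is_lim_seq_mult'. apply is_lim_seq_const. auto.
Qed.

Lemma loc_pos x (P : R -> Prop) : 0 < x -> (forall y, 0 < y -> P y) -> locally x P.
Proof. intros Hx H. exists (mkposreal x Hx). intros y Hy. apply H.
 change (Rabs (y - x) < x) in Hy. apply Rabs_lt_between' in Hy. lra. Qed.

Lemma loc_neg x (P : R -> Prop) : x < 0 -> (forall y, y < 0 -> P y) -> locally x P.
Proof. intros Hx H. assert (Hx' : 0 < -x) by lra. exists (mkposreal (-x) Hx'). intros y Hy. apply H.
 change (Rabs (y - x) < -x) in Hy. apply Rabs_lt_between' in Hy. lra. Qed.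

Lemma rpow_pos_eq u b : 0 < u -> rpow u b = Rpower u b.
Proof. intros. unfold rpow. destruct (Rle_dec u 0); lra. Qed.
Lemma rpow_npos_eq u b : u <= 0 -> rpow u b = 0.
Proof. intros. unfold rpow. destruct (Rle_dec u 0); lra. Qed.

Lemma rpow_small b eps : 0 < b -> 0 < eps -> forall h, 0 < h -> h < Rpower eps (/ b) -> Rpower h b < eps.
Proof. intros Hb He h Hh Hlt.
 replace eps with (Rpower (Rpower eps (/ b)) b) at 1.
 apply Rlt_Rpower_l; auto. rewrite Rpower_mult. replace (/ b * b) with 1 by (field; lra). apply Rpower_1; auto. Qed.

Lemma rpow_cont b x : 0 < b -> continuous (fun u => rpow u b) x.
Proof.
 intros Hb. destruct (Rtotal_order x 0) as [Hx|[Hx|Hx]].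
 - apply continuous_ext_loc with (fun _ => 0). apply loc_neg; auto. intros; rewrite rpow_npos_eq; lra.
   apply continuous_const.
 - subst. apply continuity_pt_filterlim. intros eps Heps. 
   exists (Rpower eps (/ b)). split. apply Rpower_pos.
   intros y [_ Hy]. change (Rabs (y - 0) < Rpower eps (/b)) in Hy. change (Rabs (rpow y b - rpow 0 b) < eps). rewrite (rpow_npos_eq 0) by lra. rewrite Rminus_0_r in *.
   destruct (Rle_dec y 0). rewrite rpow_npos_eq by auto. rewrite Rabs_R0; auto.
   rewrite rpow_pos_eq by lra. rewrite Rabs_right by (left; apply Rpower_pos). apply rpow_small; auto. lra.
   rewrite Rabs_right in Hy; lra.
 - apply continuous_ext_loc with (fun u => Rpower u b). apply loc_pos; auto. intros; rewrite rpow_pos_eq; lra.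
   apply continuity_pt_filterlim. apply derivable_continuous_pt. exists (b * Rpower x (b - 1)). apply derivable_pt_lim_power; auto.
Qed.

Lemma rpow_deriv b x : 0 < b -> is_derive (fun u => rpow u (b + 1)) x ((b + 1) * rpow x b).
Proof.
 intros Hb. destruct (Rtotal_order x 0) as [Hx|[Hx|Hx]].
 - rewrite rpow_npos_eq by lra. rewrite Rmult_0_r.
   apply is_derive_ext_loc with (fun _ => 0). apply loc_neg; auto. intros; rewrite rpow_npos_eq; lra.
   apply is_derive_Reals. apply derivable_pt_lim_const.
 - subst. rewrite rpow_npos_eq by lra. rewrite Rmult_0_r. apply is_derive_Reals.
   intros eps Heps. exists (mkposreal _ (Rpower_pos eps (/ b))). intros h Hh0 Hh. simpl in Hh.
   rewrite Rplus_0_l. rewrite (rpow_npos_eq 0) by lra. rewrite Rminus_0_r.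
   destruct (Rle_dec h 0). rewrite rpow_npos_eq by auto. replace ((0 - 0) / h) with 0 by (field; auto). rewrite Rabs_R0; auto.
   rewrite rpow_pos_eq by lra. rewrite Rpower_succ by lra.
   replace ((Rpower h b * h - 0) / h) with (Rpower h b) by (field; lra).
   rewrite Rabs_right by (left; apply Rpower_pos). apply rpow_small; auto. lra.
   rewrite Rabs_right in Hh; lra.
 - rewrite rpow_pos_eq by lra.
   apply is_derive_ext_loc with (fun u => Rpower u (b + 1)). apply loc_pos; auto. intros; rewrite rpow_pos_eq; lra.
   apply is_derive_Reals. replace (Rpower x b) with (Rpower x (b + 1 - 1)) by (f_equal; ring).
   apply derivable_pt_lim_power; auto.
Qed.

Lemma eqR (a b : R) : a = b -> a = b.
Proof. auto. Qed.

Lemma is_RInt_val (f : R -> R) a b l l' : is_RInt f a b l -> l = l' -> is_RInt f a b l'.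
Proof. intros H E; subst; auto. Qed.

Lemma rpow_cont_pt b x : 0 < b -> continuity_pt (fun u => rpow u b) x.
Proof. intros. apply continuity_pt_filterlim. apply (rpow_cont b x H). Qed.

Lemma poly_cont_pt v d x : continuity_pt (fun u => (v - u) ^ d) x.
Proof. apply derivable_continuous_pt. reg. Qed.

Lemma poly_deriv v d x : is_derive (fun u => (v - u) ^ S d) x (- (INR (S d) * (v - x) ^ d)).
Proof. apply is_derive_Reals.
 pose proof (derivable_pt_lim_pow (v - x) (S d)).
 replace (- (INR (S d) * (v - x) ^ d)) with ((INR (S d) * (v - x) ^ pred (S d)) * (0 - 1)) by (simpl; ring).
 apply (derivable_pt_lim_comp (fun u => v - u) (fun y => y ^ S d)).
 apply derivable_pt_lim_minus. apply derivable_pt_lim_const. apply derivable_pt_lim_id. auto.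
Qed.

Lemma int_pow d : forall al v, 0 < al -> 0 <= v ->
  is_RInt (fun u => rpow u al * (v - u) ^ d) 0 v
    (rpow v (al + INR d + 1) * INR (fact d) / pr (fun l => al + 1 + INR l) (S d)).
Proof.
 induction d; intros al v Hal Hv.
 - assert (H := is_RInt_derive (fun u => / (al + 1) * rpow u (al + 1)) (fun u => / (al + 1) * ((al + 1) * rpow u al)) 0 v).
   assert (H' : is_RInt (fun u => / (al + 1) * ((al + 1) * rpow u al)) 0 v (minus (/ (al + 1) * rpow v (al + 1)) (/ (al + 1) * rpow 0 (al + 1)))).
   { apply H. intros; apply is_derive_scal, rpow_deriv; auto.
     intros x _. apply continuity_pt_filterlim. apply continuity_pt_scal. apply continuity_pt_scal. apply rpow_cont_pt; auto. }
   eapply is_RInt_val.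
   + apply is_RInt_ext with (2 := H'). intros; simpl; field; lra.
   + change (minus (/ (al + 1) * rpow v (al + 1)) (/ (al + 1) * rpow 0 (al + 1))) with (/ (al + 1) * rpow v (al + 1) - / (al + 1) * rpow 0 (al + 1)).
     rewrite (rpow_npos_eq 0) by lra. simpl. replace (al + 0 + 1) with (al + 1) by ring. field. lra.
 - set (F := fun u => / (al + 1) * (rpow u (al + 1) * (v - u) ^ S d)).
   set (dF := fun u => / (al + 1) * ((al + 1) * rpow u al * (v - u) ^ S d + rpow u (al + 1) * (- (INR (S d) * (v - u) ^ d)))).
   assert (H' : is_RInt dF 0 v (minus (F v) (F 0))).
   { apply (is_RInt_derive F dF 0 v).
     - intros x _. unfold F, dF. apply is_derive_scal.
       apply (is_derive_mult (fun u => rpow u (al + 1)) (fun u => (v - u) ^ S d)).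
       apply rpow_deriv; auto. apply poly_deriv. intros; apply Rmult_comm.
     - intros x _. apply continuity_pt_filterlim. unfold dF. apply continuity_pt_scal. apply continuity_pt_plus.
       apply continuity_pt_mult. apply continuity_pt_scal. apply rpow_cont_pt; auto. apply poly_cont_pt.
       apply continuity_pt_mult. apply rpow_cont_pt; lra. apply continuity_pt_opp. apply continuity_pt_scal. apply poly_cont_pt. }
   assert (IH := IHd (al + 1) v ltac:(lra) Hv).
   assert (H2 := is_RInt_plus _ _ _ _ _ _ H' (is_RInt_scal _ _ _ (INR (S d) / (al + 1)) _ IH)).
   eapply is_RInt_val.
   + apply is_RInt_ext with (2 := H2). intros x _. unfold dF. change (plus ?a ?b) with (a + b). change (scal ?a ?b) with (a * b).
     apply eqR. field. lra.
   + apply eqR. change (plus ?a ?b) with (a + b). change (scal ?a ?b) with (a * b). change (minus ?a ?b) with (a - b).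
     unfold F. rewrite (rpow_npos_eq 0) by lra. rewrite Rminus_diag. simpl pow. 
     rewrite (pr_shift (fun l => al + 1 + INR l)). rewrite (pr_ext (fun l => al + 1 + INR (S l)) (fun l => al + 1 + 1 + INR l)) by (intros; rewrite S_INR; ring).
     replace (al + 1 + INR d + 1) with (al + INR (S d) + 1) by (rewrite S_INR; ring).
     change (fact (S d)) with (S d * fact d)%nat. rewrite mult_INR.
     assert (0 < pr (fun l => al + 1 + 1 + INR l) (S d)) by (apply pr_pos; intros; pose proof (pos_INR l); lra).
     change (INR 0) with 0. field. split; lra.
Qed.

Lemma is_has f a b I : is_RInt f a b I -> has_RInt f a b I.
Proof. intros H. assert (ex : ex_RInt f a b) by (exists I; auto).
 exists (ex_RInt_Reals_0 _ _ _ ex). rewrite <- RInt_Reals. apply is_RInt_unique; auto. Qed.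

Lemma inf_sum_scal f g C l : infinite_sum f l -> (forall k, g k = C * f k) -> infinite_sum g (C * l).
Proof. intros H E. apply is_lim_seq_Reals. apply is_lim_seq_Reals in H.
 apply is_lim_seq_ext with (fun K => C * sum_f_R0 f K).
 { intros K. induction K; simpl. rewrite E; auto. rewrite <- IHK, E. ring. }
 apply (is_lim_seq_scal_l _ C l H). Qed.

Lemma poc_neg nu k : poc (- nu) k = (-1) ^ k * pr (fun l => nu - INR l) k.
Proof. induction k. unfold poc; simpl; ring. rewrite poc_S, IHk. cbn [pr pow]. ring. Qed.

Lemma fact_poc m k : INR (fact (m + k)) = INR (fact m) * poc (INR (S m)) k.
Proof. induction k. rewrite Nat.add_0_r. unfold poc; simpl; ring.
 rewrite poc_S. rewrite Nat.add_succ_r. change (fact (S (m + k))) with (S (m + k) * fact (m + k))%nat.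
 rewrite mult_INR, IHk. rewrite S_INR, plus_INR, S_INR. ring. Qed.

Lemma rpow_1 b : rpow 1 b = 1.
Proof. rewrite rpow_pos_eq by lra. unfold Rpower. rewrite ln_1, Rmult_0_r. apply exp_0. Qed.

Theorem mainTheorem4 (n i j : nat) (nu : R)
  (hn : (2 <= n)%nat) (hi : (1 <= i)%nat) (hij : (i < j)%nat) (hj : (j <= n)%nat)
  (hnu : 0 < nu) :
  exists S : R,
    infinite_sum (series_term n j nu) S /\
    os_moment_is n i j nu
      (Gamma (INR n + 1) * Gamma (nu + 1) * Gamma (nu + INR i)
       / (Gamma (INR i) * Gamma (INR n + 1 - INR j)) * S).
Proof.
 assert (Hex : exists p d m, i = S p /\ j = (S p + S d)%nat /\ n = (S p + S d + m)%nat)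
   by (exists (i-1)%nat, (j-i-1)%nat, (n-j)%nat; lia).
 destruct Hex as [p [d [m [-> [-> ->]]]]].
 pose proof (pos_INR p) as Hp. pose proof (pos_INR d) as Hd. pose proof (pos_INR m) as Hm.
 destruct (Gamma_cv (nu+1) ltac:(lra)) as [_ HG1].
 set (G1 := Gamma (nu + 1)) in *.
 set (a := - nu). set (c := nu + INR (S p + S d + m) + 1).
 assert (Ec : c = nu + INR p + INR d + INR m + 3) by (unfold c; rewrite !plus_INR, !S_INR; ring).
 set (Qn := pr (fun l => nu + 1 + INR l) (S p + S d + m)).
 assert (HQn : 0 < Qn) by (apply pr_pos; intros; pose proof (pos_INR l); lra).
 set (F := pr (fun l => (c - 1 - INR l) / (c - a - 1 - INR l)) (S m)).
 exists (INR (fact m) / (G1 * G1 * Qn) * F).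
 split.
 - apply inf_sum_scal with (uu a (INR (S m)) c).
   + apply series_b. unfold a; lra. rewrite Ec, S_INR. lra.
   + intros k. unfold series_term.
     rewrite (RGamma_down nu k hnu). fold G1.
     replace (INR (S p + S d + m) + INR k + 1 - INR (S p + S d)) with (INR (m + k) + 1) by (rewrite !plus_INR, !S_INR; ring).
     rewrite Gamma_nat. rewrite Gamma_nat.
     replace (nu + INR (S p + S d + m) + INR k + 1) with ((nu + 1) + INR ((S p + S d + m) + k)) by (rewrite !plus_INR; ring).
     rewrite Gamma_shift by lra. fold G1. rewrite pr_add. fold Qn.
     unfold uu. unfold a. rewrite poc_neg. rewrite fact_poc.
     replace (poc c k) with (pr (fun l => nu + 1 + INR (S p + S d + m + l)) k).
     2: { unfold poc, c. apply pr_ext. intros. rewrite plus_INR. ring. }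
     assert (0 < pr (fun l => nu + 1 + INR (S p + S d + m + l)) k) by (apply pr_pos; intros; pose proof (pos_INR (S p + S d + m + l)); lra).
     pose proof (INR_fact_pos k). pose proof (INR_fact_pos m).
     field. repeat split; lra.
 - set (al := INR p + nu).
   set (K0 := INR (fact (S p + S d + m)) / (INR (fact p) * INR (fact d) * INR (fact m))).
   set (A := pr (fun l => al + 1 + INR l) (S d)).
   set (be := al + INR d + 1 + nu).
   set (B := pr (fun l => be + 1 + INR l) (S m)).
   assert (HA : 0 < A) by (apply pr_pos; intros; pose proof (pos_INR l); unfold al; lra).
   assert (HB : 0 < B) by (apply pr_pos; intros; pose proof (pos_INR l); unfold be, al; lra).
   assert (GN : Gamma (INR (S p + S d + m) + 1) = INR (fact (S p + S d + m))) by apply Gamma_nat.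
   assert (Gi : Gamma (INR (S p)) = INR (fact p)) by (rewrite S_INR; apply Gamma_nat).
   assert (Gji : Gamma (INR (S p + S d) - INR (S p)) = INR (fact d)).
   { replace (INR (S p + S d) - INR (S p)) with (INR d + 1) by (rewrite !plus_INR, !S_INR; ring). apply Gamma_nat. }
   assert (Gnj : Gamma (INR (S p + S d + m) + 1 - INR (S p + S d)) = INR (fact m)).
   { replace (INR (S p + S d + m) + 1 - INR (S p + S d)) with (INR m + 1) by (rewrite !plus_INR, !S_INR; ring). apply Gamma_nat. }
   assert (Gvi : Gamma (nu + INR (S p)) = G1 * pr (fun l => nu + 1 + INR l) p).
   { replace (nu + INR (S p)) with ((nu + 1) + INR p) by (rewrite S_INR; ring). apply Gamma_shift; lra. }
   rewrite GN, Gi, Gnj, Gvi.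
   pose proof (INR_fact_pos p). pose proof (INR_fact_pos d). pose proof (INR_fact_pos m).
   pose proof (INR_fact_pos (S p + S d + m)).
   replace (INR (fact (S p + S d + m)) * G1 * (G1 * pr (fun l => nu + 1 + INR l) p) / (INR (fact p) * INR (fact m)) *
     (INR (fact m) / (G1 * G1 * Qn) * F)) with (K0 * (INR (fact d) / A) * (INR (fact m) / B)).
   2: {
   assert (EQn : Qn = pr (fun l => nu + 1 + INR l) p * A * pr (fun l => nu + 1 + INR (p + S d + l)) (S m)).
   { unfold Qn. replace (S p + S d + m)%nat with (p + S d + S m)%nat by lia. rewrite pr_add, pr_add.
     f_equal. f_equal. unfold A, al. apply pr_ext; intros; rewrite plus_INR; ring. }
   assert (EFn : pr (fun l => nu + 1 + INR (p + S d + l)) (S m) = pr (fun l => c - 1 - INR l) (S m)).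
   { rewrite <- (pr_rev (fun l => c - 1 - INR l) m). apply pr_ext. intros l Hl. rewrite Ec. rewrite minus_INR by lia. rewrite !plus_INR, !S_INR. ring. }
   assert (EB : B = pr (fun l => c - a - 1 - INR l) (S m)).
   { rewrite <- (pr_rev (fun l => c - a - 1 - INR l) m). unfold B. apply pr_ext. intros l Hl. unfold a, be, al. rewrite Ec, minus_INR by lia. ring. }
   assert (HFn : 0 < pr (fun l => c - 1 - INR l) (S m)) by (rewrite <- EFn; apply pr_pos; intros; pose proof (pos_INR (p + S d + l)); lra).
   assert (EF : F = pr (fun l => c - 1 - INR l) (S m) / B).
   { rewrite EB. unfold F, Rdiv. rewrite pr_mult, pr_inv. auto. intros l Hl. apply lt_INR in Hl. rewrite S_INR in Hl. unfold a. rewrite Ec. intro; lra. }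
   assert (0 < pr (fun l => nu + 1 + INR l) p) by (apply pr_pos; intros; pose proof (pos_INR l); lra).
   rewrite EF, EQn, EFn. unfold K0. field. repeat split; lra. }
   exists (fun v => K0 * (1 - v) ^ m * rpow v nu * (rpow v (al + INR d + 1) * INR (fact d) / A)).
   split.
   + intros v Hv. apply is_has.
     assert (HI := int_pow d al v ltac:(unfold al; lra) (proj1 Hv)).
     apply (is_RInt_scal _ _ _ (K0 * (1 - v) ^ m * rpow v nu)) in HI.
     eapply is_RInt_val. apply is_RInt_ext with (2 := HI).
     * intros u Hu. rewrite Rmin_left, Rmax_right in Hu by lra.
       unfold os_density. rewrite GN, Gi, Gji, Gnj.
       replace (S p - 1)%nat with p by lia. replace (S p + S d - S p - 1)%nat with d by lia.
       replace (S p + S d + m - (S p + S d))%nat with m by lia.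
       change (scal ?x ?y) with (x * y). apply eqR.
       rewrite (rpow_pos_eq u al) by lra. unfold al. rewrite Rpower_plus, Rpower_pow by lra.
       rewrite (rpow_pos_eq u nu) by lra. unfold K0. field. repeat split; lra.
     * change (scal ?x ?y) with (x * y). apply eqR. fold A. ring.
   + apply is_has.
     assert (HI := int_pow m be 1 ltac:(unfold be, al; lra) ltac:(lra)).
     apply (is_RInt_scal _ _ _ (K0 * (INR (fact d) / A))) in HI.
     eapply is_RInt_val. apply is_RInt_ext with (2 := HI).
     * intros v Hv. rewrite Rmin_left, Rmax_right in Hv by lra.
       change (scal ?x ?y) with (x * y). apply eqR.
       unfold be. rewrite !(rpow_pos_eq v) by lra. rewrite Rpower_plus. field. lra.
     * change (scal ?x ?y) with (x * y). apply eqR. rewrite rpow_1. fold B. field. lra.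
Qed.
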